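(* Consider the iteration $\hat P_{i+1}=\mathcal H\big(\mathcal Q(\hat P_i)+\Delta Q_i\big)$, $i\in\mathbb Z_+$, with $\hat P_0\in\mathbb S^n_+$ and $\Delta Q_i\in\mathbb S^{n+m}$, and let $\|\Delta Q\|_\infty=\sup_i\|\Delta Q_i\|_2$. For every $\hat P_0\in\mathbb S^n_+$ there exist $d^*>0$, a $\mathcal{KL}$-function $\beta$ and a $\mathcal K$-function $\tilde\gamma$ such that whenever $\|\Delta Q\|_\infty<d^*$ the iteration is well defined and $$\|\hat P_i-P^*\|_2\le\beta(\|\hat P_0-P^*\|_2,i)+\tilde\gamma(\|\Delta Q\|_\infty)\quad\text{for all } i\in\mathbb Z_+.$$
   Context: Let $n,m\ge 1$, $A\in\mathbb R^{n\times n}$, $B\in\mathbb R^{n\times m}$, $S\in\mathbb S^n_{++}$, $R\in\mathbb S^m_{++}$, with $(A,B)$ stabilizable. Here $\mathbb S^n$, $\mathbb S^n_+$, $\mathbb S^n_{++}$ denote the real symmetric, symmetric positive semidefinite, and symmetric positive definite $n\times n$ matrices; $\|\cdot\|_2$ is the spectral norm. For $P\in\mathbb S^n_+$ define the Hamiltonian $\mathcal Q(P)=\begin{pmatrix}A^\top PA+S & A^\top PB\\ B^\top PA & B^\top PB+R\end{pmatrix}\in\mathbb S^{n+m}$. For $Q\in\mathbb R^{(n+m)\times(n+m)}$ partitioned as $Q=\begin{pmatrix}[Q]_{xx} & [Q]_{ux}^\top\\ [Q]_{ux} & [Q]_{uu}\end{pmatrix}$ with $[Q]_{xx}\in\mathbb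 R^{n\times n}$, $[Q]_{uu}\in\mathbb R^{m\times m}$ invertible, define the Schur complement $\mathcal H(Q)=[Q]_{xx}-[Q]_{ux}^\top[Q]_{uu}^{-1}[Q]_{ux}$. $P^*\in\mathbb S^n_{++}$ denotes the unique positive definite solution of $P=\mathcal H(\mathcal Q(P))$ (the discrete algebraic Riccati equation). Class $\mathcal K$: continuous, strictly increasing functions $\mathbb R_+\to\mathbb R_+$ vanishing at $0$. Class $\mathcal{KL}$: $\beta:\mathbb R_+\times\mathbb Z_+\to\mathbb R_+$ with $\beta(\cdot,i)\in\mathcal K$ for each $i$ and $\beta(r,i)\downarrow0$ as $i\to\infty$ for each $r\ge0$. *)

(* Defs.v *)
From HB Require Import structures.
From mathcomp Require Import all_boot all_order all_algebra.
From mathcomp Require Import all_classical all_reals all_analysis.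
From mathcomp Require Import complex.
Set Implicit Arguments. Unset Strict Implicit. Unset Printing Implicit Defensive.
Import Order.TTheory GRing.Theory Num.Theory numFieldNormedType.Exports.
Local Open Scope classical_set_scope.
Local Open Scope ring_scope.

Section Defs.
Variable R : realType.

Definition vnorm2 {k : nat} (x : 'cV[R]_k) : R :=
  Num.sqrt (\sum_(i < k) (x i 0) ^+ 2).

Definition specnorm {p q : nat} (M : 'M[R]_(p, q)) : R :=
  sup [set vnorm2 (M *m x) | x in [set x : 'cV[R]_q | vnorm2 x <= 1]].

Definition symmx {k : nat} (P : 'M[R]_k) : Prop := P^T = P.

Definition psd {k : nat} (P : 'M[R]_k) : Prop :=
  symmx P /\ forall x : 'cV[R]_k, 0 <= (x^T *m P *m x) 0 0.

Definition posdef {k : nat} (P : 'M[R]_k) : Prop :=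
  symmx P /\ forall x : 'cV[R]_k, x != 0 -> 0 < (x^T *m P *m x) 0 0.

Definition schur_stable {k : nat} (M : 'M[R]_k) : Prop :=
  forall lam : R[i],
    root (char_poly (map_mx (fun a : R => (a%:C)%C) M)) lam -> `|lam| < 1.

Definition stabilizable {n m : nat} (A : 'M[R]_n) (B : 'M[R]_(n, m)) : Prop :=
  exists K : 'M[R]_(m, n), schur_stable (A + B *m K).

Definition Qham {n m : nat} (A : 'M[R]_n) (B : 'M[R]_(n, m))
  (S : 'M[R]_n) (Rc : 'M[R]_m) (P : 'M[R]_n) : 'M[R]_(n + m) :=
  block_mx (A^T *m P *m A + S) (A^T *m P *m B)
           (B^T *m P *m A) (B^T *m P *m B + Rc).

(* blocks of Q = [[Q_xx, Q_ux^T],[Q_ux, Q_uu]] *)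
Definition blk_xx {n m : nat} (Q : 'M[R]_(n + m)) : 'M[R]_n := ulsubmx Q.
Definition blk_ux {n m : nat} (Q : 'M[R]_(n + m)) : 'M[R]_(m, n) := dlsubmx Q.
Definition blk_uu {n m : nat} (Q : 'M[R]_(n + m)) : 'M[R]_m := drsubmx Q.

(* Schur complement H(Q) (meaningful when blk_uu Q is invertible) *)
Definition Hschur {n m : nat} (Q : 'M[R]_(n + m)) : 'M[R]_n :=
  blk_xx Q - (blk_ux Q)^T *m invmx (blk_uu Q) *m blk_ux Q.

Fixpoint Phat {n m : nat} (A : 'M[R]_n) (B : 'M[R]_(n, m))
  (S : 'M[R]_n) (Rc : 'M[R]_m) (P0 : 'M[R]_n)
  (dQ : nat -> 'M[R]_(n + m)) (i : nat) : 'M[R]_n :=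
  match i with
  | O => P0
  | i'.+1 => Hschur (Qham A B S Rc (Phat A B S Rc P0 dQ i') + dQ i')
  end.

(* ||dQ||_oo = sup_i ||dQ_i||_2 (used together with a boundedness hypothesis) *)
Definition supnorm {p : nat} (dQ : nat -> 'M[R]_p) : R :=
  sup [set specnorm (dQ i) | i in [set: nat]].

Definition classK (f : R -> R) : Prop :=
  {within [set x : R | 0 <= x], continuous f} /\
  (forall x y, 0 <= x -> x < y -> f x < f y) /\
  f 0 = 0 /\ (forall x, 0 <= x -> 0 <= f x).

Definition classKL (beta : R -> nat -> R) : Prop :=
  (forall i, classK (fun r => beta r i)) /\
  (forall r, 0 <= r ->
     (forall i, beta r i.+1 <= beta r i) /\
     ((fun i => beta r i) @ \oo --> (0 : R))).

End Defs.

(* Main.v *)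
Require Import Defs.
From HB Require Import structures.
From mathcomp Require Import all_boot all_order all_algebra.
From mathcomp Require Import all_classical all_reals all_analysis.
From mathcomp Require Import complex.
From mathcomp Require Import ring lra.
Import Order.TTheory GRing.Theory Num.Theory numFieldNormedType.Exports.
Set Implicit Arguments. Unset Strict Implicit. Unset Printing Implicit Defensive.
Local Open Scope classical_set_scope.
Local Open Scope ring_scope.


Section QF.
Variable R : realType.

Definition qf {k : nat} (M : 'M[R]_k) (x : 'cV[R]_k) : R := (x^T *m M *m x) 0 0.
Definition sq {k : nat} (x : 'cV[R]_k) : R := (x^T *m x) 0 0.
Definition bl {k l : nat} (x : 'cV[R]_k) (M : 'M[R]_(k,l)) (y : 'cV[R]_l) : R :=
  (x^T *m M *m y) 0 0.

Lemma qfD k (M N : 'M[R]_k) x : qf (M + N) x = qf M x + qf N x.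
Proof. by rewrite /qf mulmxDr mulmxDl mxE. Qed.
Lemma qfN k (M : 'M[R]_k) x : qf (- M) x = - qf M x.
Proof. by rewrite /qf mulmxN mulNmx mxE. Qed.
Lemma qfB k (M N : 'M[R]_k) x : qf (M - N) x = qf M x - qf N x.
Proof. by rewrite qfD qfN. Qed.
Lemma qfZ k (M : 'M[R]_k) a x : qf (a *: M) x = a * qf M x.
Proof. by rewrite /qf -scalemxAr -scalemxAl mxE. Qed.
Lemma qf0 k (x : 'cV[R]_k) : qf 0 x = 0.
Proof. by rewrite /qf mulmx0 mul0mx mxE. Qed.
Lemma tr11 (a : 'M[R]_1) : a 0 0 = a^T 0 0.
Proof. by rewrite mxE. Qed.
Lemma qf_tr k (M : 'M[R]_k) x : qf M^T x = qf M x.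
Proof.
rewrite /qf; have -> : x^T *m M^T *m x = (x^T *m M *m x)^T.
  by rewrite !trmx_mul trmxK mulmxA.
by rewrite mxE.
Qed.
Lemma qf_conj k l (C : 'M[R]_(k,l)) (M : 'M[R]_k) x :
  qf (C^T *m M *m C) x = qf M (C *m x).
Proof. by rewrite /qf trmx_mul !mulmxA. Qed.
Lemma qfZv k (M : 'M[R]_k) a x : qf M (a *: x) = a ^+ 2 * qf M x.
Proof.
rewrite /qf; have -> : (a *: x)^T = a *: x^T by apply/matrixP=> i j; rewrite !mxE.
by rewrite -!scalemxAl -scalemxAr !mxE mulrA expr2.
Qed.
Lemma blE k l (x : 'cV[R]_k) M (y : 'cV[R]_l) : bl x M y = bl y M^T x.
Proof.
rewrite /bl; have -> : y^T *m M^T *m x = (x^T *m M *m y)^T.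
  by rewrite !trmx_mul trmxK mulmxA.
exact: tr11.
Qed.
Lemma qf_sum k (M : 'M[R]_k) x y :
  qf M (x + y) = qf M x + bl x M y + bl y M x + qf M y.
Proof.
rewrite /qf /bl; have -> : (x + y)^T = x^T + y^T by apply/matrixP=> i j; rewrite !mxE.
rewrite !mulmxDl !mulmxDr !mxE; lra.
Qed.

Lemma sq_col k l (x : 'cV[R]_k) (u : 'cV[R]_l) : sq (col_mx x u) = sq x + sq u.
Proof. by rewrite /sq tr_col_mx mul_row_col mxE. Qed.

Lemma qf_block k l (a : 'M[R]_k) (b : 'M[R]_(k,l)) c (d : 'M[R]_l) x u :
  qf (block_mx a b c d) (col_mx x u) = qf a x + bl x b u + bl u c x + qf d u.
Proof.
rewrite /qf /bl tr_col_mx mul_row_block mul_row_col !mulmxDl !mxE; lra.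
Qed.

Lemma qf_Qham n m (A : 'M[R]_n) (B : 'M[R]_(n, m)) S Rc P x u :
  qf (Qham A B S Rc P) (col_mx x u) =
  qf P (A *m x + B *m u) + qf S x + qf Rc u.
Proof.
rewrite /Qham qf_block qf_sum !qfD -!qf_conj /bl.
rewrite !trmx_mul !mulmxA; lra.
Qed.


Lemma uu_sym n m (Q : 'M[R]_(n + m)) : symmx Q -> (blk_uu Q)^T = blk_uu Q.
Proof. by rewrite /symmx /blk_uu trmx_drsub => ->. Qed.
Lemma ux_sym n m (Q : 'M[R]_(n + m)) : symmx Q -> ursubmx Q = (blk_ux Q)^T.
Proof. by rewrite /symmx /blk_ux trmx_dlsub => ->. Qed.
Lemma xx_sym n m (Q : 'M[R]_(n + m)) : symmx Q -> (blk_xx Q)^T = blk_xx Q.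
Proof. by rewrite /symmx /blk_xx trmx_ulsub => ->. Qed.

Lemma Hschur_sym n m (Q : 'M[R]_(n + m)) : symmx Q -> symmx (Hschur Q).
Proof.
move=> sQ; rewrite /symmx /Hschur linearB /= xx_sym //.
by rewrite !trmx_mul trmxK trmx_inv uu_sym // mulmxA.
Qed.

Lemma schur_id n m (Q : 'M[R]_(n + m)) x u : symmx Q -> blk_uu Q \in unitmx ->
  qf Q (col_mx x u) = qf (Hschur Q) x +
     qf (blk_uu Q) (u + invmx (blk_uu Q) *m blk_ux Q *m x).
Proof.
move=> sQ uQ.
rewrite -{1}(submxK Q) qf_block qf_sum ux_sym // /Hschur qfB.
rewrite /qf /bl !trmx_mul trmx_inv uu_sym // !mulmxA.
rewrite -!(mulmxA _ (blk_uu Q) (invmx (blk_uu Q))) mulmxV // mulmx1.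
rewrite -!(mulmxA _ (invmx (blk_uu Q)) (blk_uu Q)) mulVmx // !mulmx1.
rewrite /blk_xx /blk_ux /blk_uu; lra.
Qed.

Lemma qf_uu n m (Q : 'M[R]_(n + m)) u : qf (blk_uu Q) u = qf Q (col_mx 0 u).
Proof.
rewrite -{2}(submxK Q) qf_block /qf /bl /blk_uu.
by rewrite trmx0 !mul0mx !mulmx0 !mxE; lra.
Qed.


Lemma sqE k (x : 'cV[R]_k) : sq x = \sum_i x i 0 ^+ 2.
Proof. by rewrite /sq mxE; apply: eq_bigr => i _; rewrite mxE expr2. Qed.
Lemma sq_ge0 k (x : 'cV[R]_k) : 0 <= sq x.
Proof. by rewrite sqE; apply: sumr_ge0 => i _; apply: sqr_ge0. Qed.
Lemma sq_eq0 k (x : 'cV[R]_k) : sq x = 0 -> x = 0.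
Proof.
rewrite sqE => /psumr_eq0P h; apply/matrixP => i j.
rewrite (ord1 j) mxE; apply/eqP; rewrite -sqrf_eq0; apply/eqP.
by apply: h => // l _; apply: sqr_ge0.
Qed.
Lemma sq_qf k (x : 'cV[R]_k) : sq x = qf 1%:M x.
Proof. by rewrite /qf mulmx1. Qed.
Lemma vnorm2_sq k (x : 'cV[R]_k) : vnorm2 x ^+ 2 = sq x.
Proof.
by rewrite /vnorm2 -sqE sqr_sqrtr // sq_ge0.
Qed.
Lemma vnorm2E k (x : 'cV[R]_k) : vnorm2 x = Num.sqrt (sq x).
Proof. by rewrite /vnorm2 sqE. Qed.
Lemma vnorm2_ge0 k (x : 'cV[R]_k) : 0 <= vnorm2 x.
Proof. by rewrite /vnorm2 sqrtr_ge0. Qed.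

Definition ip {k : nat} (x y : 'cV[R]_k) : R := (x^T *m y) 0 0.

Lemma blZr k l (x : 'cV[R]_k) (M : 'M[R]_(k,l)) a y : bl x M (a *: y) = a * bl x M y.
Proof. by rewrite /bl -scalemxAr mxE. Qed.
Lemma blZl k l (x : 'cV[R]_k) (M : 'M[R]_(k,l)) a y : bl (a *: x) M y = a * bl x M y.
Proof. by rewrite blE blZr -blE. Qed.

Lemma sq_sub k (x y : 'cV[R]_k) t :
  sq (x - t *: y) = sq x - 2 * t * ip x y + t ^+ 2 * sq y.
Proof.
rewrite -scaleNr !sq_qf qf_sum qfZv blZr blZl [bl y _ _]blE trmx1.
have -> : bl x 1%:M y = ip x y by rewrite /bl /ip mulmx1.
rewrite sqrrN; lra.
Qed.


Lemma cs k (x y : 'cV[R]_k) : ip x y ^+ 2 <= sq x * sq y.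
Proof.
case: (sq y =P 0) => [/sq_eq0 -> | ny].
  by rewrite /ip mulmx0 mxE expr0n mulr_ge0 ?sq_ge0.
have sy : 0 < sq y by rewrite lt_def sq_ge0 andbT; apply/eqP.
have h := sq_ge0 (x - (ip x y / sq y) *: y); rewrite sq_sub in h.
rewrite -subr_ge0.
have -> : sq x * sq y - ip x y ^+ 2 =
  sq y * (sq x - 2 * (ip x y / sq y) * ip x y + (ip x y / sq y) ^+ 2 * sq y).
  by field; apply/eqP.
by rewrite mulr_ge0 // ltW.
Qed.

Lemma cs_abs k (x y : 'cV[R]_k) : `|ip x y| <= vnorm2 x * vnorm2 y.
Proof.
rewrite !vnorm2E -sqrtrM ?sq_ge0 // -sqrtr_sqr.
by apply: ler_wsqrtr; apply: cs.
Qed.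

Lemma vnorm2Z k a (x : 'cV[R]_k) : vnorm2 (a *: x) = `|a| * vnorm2 x.
Proof.
by rewrite !vnorm2E !sq_qf qfZv sqrtrM ?sqr_ge0 // sqrtr_sqr.
Qed.

Lemma vnorm2_eq0 k (x : 'cV[R]_k) : vnorm2 x = 0 -> x = 0.
Proof.
rewrite vnorm2E => /eqP; rewrite sqrtr_eq0 => h.
by apply: sq_eq0; apply/eqP; rewrite eq_le h sq_ge0.
Qed.

Lemma sq_mul k l (M : 'M[R]_(k,l)) x :
  sq (M *m x) <= (\sum_i sq (row i M)^T) * sq x.
Proof.
rewrite sqE mulr_suml; apply: ler_sum => i _.
have -> : (M *m x) i 0 = ip (row i M)^T x.
  by rewrite /ip trmxK -row_mul [RHS]mxE.
exact: cs.
Qed.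

Lemma vnorm2_0 k : vnorm2 (0 : 'cV[R]_k) = 0.
Proof. by rewrite /vnorm2 big1 ?sqrtr0 // => i _; rewrite mxE expr0n. Qed.

Definition specset {p q : nat} (M : 'M[R]_(p, q)) :=
  [set vnorm2 (M *m x) | x in [set x : 'cV[R]_q | vnorm2 x <= 1]].

Lemma specset_ub p q (M : 'M[R]_(p, q)) : has_ubound (specset M).
Proof.
set C0 := \sum_i sq (row i M)^T.
have C0ge : 0 <= C0 by apply: sumr_ge0 => i _; apply: sq_ge0.
exists (Num.sqrt C0) => _ [x /= hx <-].
rewrite vnorm2E; apply: ler_wsqrtr; apply: (le_trans (sq_mul M x)).
rewrite -[leRHS]mulr1; apply: ler_wpM2l => //.
rewrite -vnorm2_sq; rewrite -(expr1n _ 2%N).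
by apply: lerXn2r => //; rewrite ?nnegrE ?vnorm2_ge0.
Qed.

Lemma specnorm_ge0 p q (M : 'M[R]_(p, q)) : 0 <= specnorm M.
Proof.
have := ub_le_sup (specset_ub M); apply.
by exists 0; rewrite /= ?mulmx0 vnorm2_0.
Qed.

Lemma vnorm2_mul_le p q (M : 'M[R]_(p, q)) x :
  vnorm2 (M *m x) <= specnorm M * vnorm2 x.
Proof.
case: (vnorm2 x =P 0) => [/vnorm2_eq0 -> | nx].
  by rewrite mulmx0 !vnorm2_0 mulr0.
have cx : 0 < vnorm2 x by rewrite lt_def vnorm2_ge0 andbT; apply/eqP.
have h : vnorm2 (M *m ((vnorm2 x)^-1 *: x)) <= specnorm M.
  apply: (ub_le_sup (specset_ub M)); exists ((vnorm2 x)^-1 *: x) => //=.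
  by rewrite vnorm2Z ger0_norm ?invr_ge0 ?vnorm2_ge0 // mulVf //; apply/eqP.
rewrite -scalemxAr vnorm2Z ger0_norm ?invr_ge0 ?vnorm2_ge0 // in h.
by rewrite -ler_pdivrMr // mulrC.
Qed.

Lemma qf_le_spec k (M : 'M[R]_k) z : `|qf M z| <= specnorm M * sq z.
Proof.
have -> : qf M z = ip z (M *m z) by rewrite /qf /ip mulmxA.
apply: (le_trans (cs_abs _ _)).
rewrite -vnorm2_sq expr2 mulrA [_ * vnorm2 z]mulrC.
by apply: ler_wpM2l; rewrite ?vnorm2_ge0 // vnorm2_mul_le.
Qed.


Lemma specnorm_le k (E : 'M[R]_k) c : symmx E -> 0 <= c ->
  (forall x, `|qf E x| <= c * sq x) -> specnorm E <= c.
Proof.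
move=> sE c0 h; apply: ge_sup.
  by exists 0, 0; rewrite /= ?mulmx0 ?vnorm2_0.
move=> _ [x /= hx <-]; set w := E *m x.
case: (vnorm2 w =P 0) => [-> // | nw].
have pw : 0 < vnorm2 w by rewrite lt_def vnorm2_ge0 andbT; apply/eqP.
set y := (vnorm2 w)^-1 *: w.
have vy : sq y = 1.
  rewrite -vnorm2_sq /y vnorm2Z ger0_norm ?invr_ge0 ?vnorm2_ge0 //.
  by rewrite mulVf ?expr1n //; apply/eqP.
have sx : sq x <= 1.
  rewrite -vnorm2_sq -(expr1n _ 2%N).
  by apply: lerXn2r => //; rewrite ?nnegrE ?vnorm2_ge0.
have xE : x^T *m E = w^T by rewrite /w trmx_mul sE.
have key : bl x E y = vnorm2 w.
  rewrite /y blZr /bl xE -/(sq w) -vnorm2_sq expr2 mulrA mulVf ?mul1r //.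
  by apply/eqP.
have byx : bl y E x = bl x E y by rewrite blE sE.
have e1 := qf_sum E x y.
have e2 := qf_sum E x ((-1) *: y).
rewrite qfZv blZr blZl byx in e2.
have s1 := qf_sum 1%:M x y.
have s2 := qf_sum 1%:M x ((-1) *: y).
rewrite qfZv blZr blZl in s2.
rewrite -!sq_qf in s1 s2.
have h1 := h (x + y); have h2 := h (x + (-1) *: y).
move: h1 h2; rewrite !ler_norml => /andP[_ h1] /andP[h2 _].
have [b1 b2] : bl y 1%:M x = bl x 1%:M y /\ True.
  by split; rewrite // blE trmx1.
rewrite b1 in s1 s2.
have : c * sq (x + y) + c * sq (x + (-1) *: y) <= 4 * c.
  rewrite -mulrDr s1 s2 vy mulrC; apply: ler_wpM2r => //; lra.
move: h1 h2 e1 e2; rewrite key byx key; lra.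
Qed.

End QF.

Section SB.
Variable R : realType.

Lemma cont_sum (T : topologicalType) (I : Type) (r : seq I) (F : I -> T -> R) :
  (forall i, continuous (F i)) -> continuous (fun t => \sum_(i <- r) F i t).
Proof.
move=> hF; elim: r => [|a r IH] /=.
  under eq_fun do rewrite big_nil; exact: cst_continuous.
under eq_fun do rewrite big_cons.
by move=> t; apply: (continuousD (hF a t) (IH t)).
Qed.

Lemma qf_rowE k (M : 'M[R]_k) (v : 'rV[R]_k) :
  qf M v^T = \sum_j (\sum_i v 0 i * M i j) * v 0 j.
Proof.
rewrite /qf trmxK mxE; apply: eq_bigr => j _; rewrite !mxE.
by congr (_ * _); apply: eq_bigr => i _; rewrite mxE.
Qed.

Lemma cont_qf k (M : 'M[R]_k) : continuous (fun v : 'rV[R]_k => qf M v^T).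
Proof.
have -> : (fun v : 'rV[R]_k => qf M v^T) =
   (fun v => \sum_j (\sum_i v 0 i * M i j) * v 0 j).
  by apply: funext => v; rewrite qf_rowE.
apply: cont_sum => j v.
apply: continuousM; last exact: coord_continuous.
apply: cont_sum => i w.
apply: continuousM; first exact: coord_continuous.
exact: cst_continuous.
Qed.


Lemma sq_normalize k (x : 'cV[R]_k) : x != 0 -> sq ((vnorm2 x)^-1 *: x) = 1.
Proof.
move=> nx.
have nv : vnorm2 x != 0 by apply/eqP => /vnorm2_eq0 /eqP; rewrite (negbTE nx).
rewrite -vnorm2_sq vnorm2Z ger0_norm ?invr_ge0 ?vnorm2_ge0 //.
by rewrite mulVf ?expr1n.
Qed.

Lemma qf_normalize k (M : 'M[R]_k) (x : 'cV[R]_k) : x != 0 ->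
  qf M x = sq x * qf M ((vnorm2 x)^-1 *: x).
Proof.
move=> nx.
have nv : vnorm2 x != 0 by apply/eqP => /vnorm2_eq0 /eqP; rewrite (negbTE nx).
rewrite qfZv -vnorm2_sq mulrA -exprMn mulfV ?expr1n ?mul1r //.
Qed.

Lemma sphere_bounded k : bounded_set [set v : 'rV[R]_k | sq v^T = 1].
Proof.
rewrite /bounded_set /= /bounded_near.
near=> M => v Av /=.
rewrite [X in X <= _]/Num.norm /= mx_normrE.
apply: (@le_trans _ _ 1); last by near: M; apply: nbhs_pinfty_ge.
elim/big_ind: _ => //; first by move=> a b ha hb; rewrite ge_max ha hb.
move=> [i j] _ /=.
rewrite (ord1 i).
have : v 0 j ^+ 2 <= 1.
  rewrite -Av sqE (bigD1 j) //= mxE ler_wpDr //.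
  by apply: sumr_ge0 => l _; apply: sqr_ge0.
by move=> h; rewrite -sqrtr_sqr -sqrtr1; apply: ler_wsqrtr.
Unshelve. all: by end_near.
Qed.

Lemma posdef_lb k (P : 'M[R]_k) : posdef P ->
  exists2 l, 0 < l & forall x, l * sq x <= qf P x.
Proof.
case: k P => [|k] P [sP hP].
  exists 1 => // x; have -> : x = 0 by apply/matrixP => [[]].
  by rewrite /qf /sq !mulmx0 !mxE mulr0.
pose A := [set v : 'rV[R]_k.+1 | sq v^T = 1].
have A0 : A !=set0.
  pose x0 : 'cV[R]_k.+1 := const_mx 1.
  have nx0 : x0 != 0.
    apply/eqP => /matrixP /(_ 0 0); rewrite !mxE => /eqP; by rewrite oner_eq0.
  exists ((vnorm2 x0)^-1 *: x0)^T; rewrite /A /= trmxK.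
  exact: sq_normalize.
have cA : compact A.
  apply: bounded_closed_compact.
    exact: sphere_bounded.
  have -> : A = (fun v : 'rV[R]_k.+1 => qf 1%:M v^T) @^-1` [set x | x = 1].
    by apply: funext => v; rewrite /A /preimage /= sq_qf.
  by apply: (continuous_closedP _).1; [exact: cont_qf | exact: closed_eq].
have cf : {within A, continuous (fun v : 'rV[R]_k.+1 => qf P v^T)}.
  by apply: continuous_subspaceT; apply: cont_qf.
have [c cA' cmin] := EVT_min_rV A0 cA cf.
have Ac : sq c^T = 1 by move: cA'; rewrite inE.
have nc : c^T != 0 by apply/eqP => c0; move: Ac; rewrite c0 /sq mulmx0 mxE => /eqP; rewrite eq_sym oner_eq0.
exists (qf P c^T); first exact: hP.
move=> x; case: (eqVneq x 0) => [-> | nx].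
  by rewrite /qf /sq !mulmx0 !mxE mulr0.
rewrite (qf_normalize P nx) mulrC; apply: ler_wpM2l; first exact: sq_ge0.
have := cmin ((vnorm2 x)^-1 *: x)^T; rewrite trmxK; apply.
by rewrite inE /A /= trmxK sq_normalize.
Qed.

End SB.

Section SC.
Variable R : realType.

Lemma classK_lin (c : R) : 0 < c -> classK (fun r => c * r).
Proof.
move=> c0; split; first by apply: continuous_subspaceT; exact: mulrl_continuous.
split; first by move=> x y _ xy; rewrite ltr_pM2l.
split; first by rewrite mulr0.
by move=> x x0; rewrite mulr_ge0 // ltW.
Qed.

Lemma classKL_geo (c rho : R) : 0 < c -> 0 < rho -> rho < 1 ->
  classKL (fun r i => c * rho ^+ i * r).
Proof.
move=> c0 r0 r1; split.
  by move=> i; apply: classK_lin; rewrite mulr_gt0 // exprn_gt0.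
move=> r rge; split.
  move=> i; rewrite exprS; apply: ler_wpM2r => //.
  rewrite mulrA [c * rho]mulrC -mulrA ger_pMl ?mulr_gt0 ?exprn_gt0 //.
  exact: ltW.
have -> : (fun i => c * rho ^+ i * r) = geometric (c * r) rho.
  by apply: funext => i /=; rewrite mulrAC.
by apply: cvg_geometric; rewrite ger0_norm // ltW.
Qed.

End SC.

Section SD.
Variable R : realType.

Lemma posdef_unit k (M : 'M[R]_k) :
  (forall u, u != 0 -> 0 < qf M u) -> M \in unitmx.
Proof.
move=> h; rewrite unitmxE unitfE; apply/negP => /det0P [v nv vM].
have nvt : v^T != 0 by apply: contra nv => /eqP; rewrite -trmx0 => /trmx_inj ->.
by have := h _ nvt; rewrite /qf trmxK vM mul0mx mxE ltxx.
Qed.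

Lemma qfv0 k (M : 'M[R]_k) : qf M 0 = 0.
Proof. by rewrite /qf mulmx0 mxE. Qed.

Lemma Qham_sym n m (A : 'M[R]_n) (B : 'M[R]_(n, m)) S Rc P :
  symmx P -> symmx S -> symmx Rc -> symmx (Qham A B S Rc P).
Proof.
move=> sP sS sR; rewrite /symmx /Qham tr_block_mx.
rewrite !linearD /= !trmx_mul !trmxK sP sS sR !mulmxA.
by [].
Qed.

Lemma colK n m (z : 'cV[R]_(n + m)) : z = col_mx (usubmx z) (dsubmx z).
Proof. by rewrite vsubmxK. Qed.


Section Step.
Variables (n m : nat) (A : 'M[R]_n) (B : 'M[R]_(n, m)) (S : 'M[R]_n)
  (Rc : 'M[R]_m) (Ps : 'M[R]_n).
Hypotheses (sS : symmx S) (sR : symmx Rc) (sPs : symmx Ps).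
Variables (lS lR mu delta : R).
Hypotheses (hS : forall x, lS * sq x <= qf S x)
  (hR : forall u, lR * sq u <= qf Rc u)
  (mu0 : 0 < mu) (muS : mu <= lS) (muR : mu <= lR)
  (d0 : 0 <= delta) (d1 : delta <= 1) (hd : forall x, delta * qf Ps x <= qf S x)
  (psPs : forall x, 0 <= qf Ps x)
  (dare : Ps = Hschur (Qham A B S Rc Ps)).

Local Notation Q P := (Qham A B S Rc P).

Lemma QP_lb P : (forall y, 0 <= qf P y) -> forall z, mu * sq z <= qf (Q P) z.
Proof.
move=> hP z; rewrite (colK z) qf_Qham sq_col.
have h1 := hP (A *m usubmx z + B *m dsubmx z).
have h2 := hS (usubmx z); have h3 := hR (dsubmx z).
have h4 : mu * sq (usubmx z) <= lS * sq (usubmx z) by apply: ler_wpM2r; rewrite ?sq_ge0.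
have h5 : mu * sq (dsubmx z) <= lR * sq (dsubmx z) by apply: ler_wpM2r; rewrite ?sq_ge0.
lra.
Qed.

Lemma QP_ge0 P : (forall y, 0 <= qf P y) -> forall z, 0 <= qf (Q P) z.
Proof.
move=> hP z; apply: le_trans (QP_lb hP z); apply: mulr_ge0; rewrite ?sq_ge0 //.
exact: ltW.
Qed.

Lemma D_bound P (D : 'M[R]_(n + m)) e : (forall y, 0 <= qf P y) ->
  specnorm D <= e * mu -> 0 <= e -> forall z, `|qf D z| <= e * qf (Q P) z.
Proof.
move=> hP hD e0 z; apply: (le_trans (qf_le_spec D z)).
apply: (@le_trans _ _ (e * mu * sq z)); first by apply: ler_wpM2r; rewrite ?sq_ge0.
by rewrite -mulrA; apply: ler_wpM2l => //; apply: QP_lb.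
Qed.

Lemma QD_ge P (D : 'M[R]_(n + m)) e : (forall y, 0 <= qf P y) ->
  specnorm D <= e * mu -> 0 <= e -> forall z,
  (1 - e) * qf (Q P) z <= qf (Q P + D) z /\ qf (Q P + D) z <= (1 + e) * qf (Q P) z.
Proof.
move=> hP hD e0 z; have := D_bound hP hD e0 z; rewrite ler_norml qfD => /andP[h1 h2].
split; lra.
Qed.

Lemma step_unit P (D : 'M[R]_(n + m)) e : (forall y, 0 <= qf P y) ->
  specnorm D <= e * mu -> 0 <= e -> e < 1 -> blk_uu (Q P + D) \in unitmx.
Proof.
move=> hP hD e0 e1; apply: posdef_unit => u nu.
rewrite qf_uu; have [h _] := QD_ge hP hD e0 (col_mx 0 u).
apply: lt_le_trans h; apply: mulr_gt0; first by rewrite subr_gt0.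
apply: lt_le_trans (QP_lb hP _); apply: mulr_gt0 => //.
rewrite sq_col; have -> : sq (0 : 'cV[R]_n) = 0 by rewrite /sq mulmx0 mxE.
rewrite add0r lt_def sq_ge0 andbT; apply/eqP => /sq_eq0 /eqP; exact/negP.
Qed.

Lemma step_psd_uu P (D : 'M[R]_(n + m)) e : (forall y, 0 <= qf P y) ->
  specnorm D <= e * mu -> 0 <= e -> e < 1 -> forall v, 0 <= qf (blk_uu (Q P + D)) v.
Proof.
move=> hP hD e0 e1 v; rewrite qf_uu; have [h _] := QD_ge hP hD e0 (col_mx 0 v).
apply: le_trans h; apply: mulr_ge0; first by rewrite subr_ge0 ltW.
exact: QP_ge0.
Qed.

Lemma Ps_unit : blk_uu (Q Ps) \in unitmx.
Proof.
apply: posdef_unit => u nu; rewrite qf_uu.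
apply: lt_le_trans (QP_lb psPs _); apply: mulr_gt0 => //.
rewrite sq_col; have -> : sq (0 : 'cV[R]_n) = 0 by rewrite /sq mulmx0 mxE.
rewrite add0r lt_def sq_ge0 andbT; apply/eqP => /sq_eq0 /eqP; exact/negP.
Qed.

Lemma Ps_sym : symmx (Q Ps). Proof. exact: Qham_sym. Qed.

Lemma Ps_opt x u : qf Ps x <= qf (Q Ps) (col_mx x u).
Proof.
rewrite (schur_id _ _ Ps_sym Ps_unit) -dare lerDl.
have := step_psd_uu psPs (D := 0) (e := 0).
rewrite addr0; apply => //.
rewrite mul0r; apply: specnorm_le => //; first exact: trmx0.
by move=> y; rewrite qf0 normr0 mul0r.
Qed.

Definition Kgain (Q : 'M[R]_(n + m)) : 'M[R]_(m, n) := - (invmx (blk_uu Q) *m blk_ux Q).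

Lemma schur_opt (Q : 'M[R]_(n + m)) x : symmx Q -> blk_uu Q \in unitmx ->
  qf (Hschur Q) x = qf Q (col_mx x (Kgain Q *m x)).
Proof.
move=> sQ uQ; rewrite (schur_id _ _ sQ uQ) /Kgain mulNmx addNr.
by rewrite qfv0 addr0.
Qed.

Lemma Ps_eq x : qf Ps x = qf (Q Ps) (col_mx x (Kgain (Q Ps) *m x)).
Proof. by rewrite {1}dare schur_opt //; [exact: Ps_sym | exact: Ps_unit]. Qed.

Lemma step_lower P (D : 'M[R]_(n + m)) e a : symmx P -> symmx D ->
  (forall y, a * qf Ps y <= qf P y) -> 0 <= a -> a <= 1 ->
  specnorm D <= e * mu -> 0 <= e -> e < 1 ->
  forall x, (1 - e) * (a + (1 - a) * delta) * qf Ps x <= qf (Hschur (Q P + D)) x.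
Proof.
move=> sP sD ha a0 a1 hD e0 e1 x.
have hP : forall y, 0 <= qf P y.
  by move=> y; apply: le_trans (ha y); apply: mulr_ge0.
have sQD : symmx (Q P + D).
  by rewrite /symmx linearD /= Qham_sym // sD.
have uQD := step_unit hP hD e0 e1.
rewrite schur_opt //; set u0 := Kgain (Q P + D) *m x.
have [h1 _] := QD_ge hP hD e0 (col_mx x u0).
apply: le_trans h1; rewrite -mulrA; apply: ler_wpM2l; first by rewrite subr_ge0 ltW.
have h2 := Ps_opt x u0; rewrite qf_Qham in h2.
rewrite qf_Qham.
have h3 := ha (A *m x + B *m u0).
have h4 : 0 <= (1 - a) * qf Rc u0.
  apply: mulr_ge0; first by rewrite subr_ge0.
  by apply: le_trans (hR u0); apply: mulr_ge0; rewrite ?sq_ge0 // (le_trans (ltW mu0)).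
have h5 : (1 - a) * (delta * qf Ps x) <= (1 - a) * qf S x.
  by apply: ler_wpM2l; rewrite ?subr_ge0.
have h6 : a * qf Ps x <= a * (qf Ps (A *m x + B *m u0) + qf S x + qf Rc u0).
  by apply: ler_wpM2l.
lra.
Qed.

Lemma step_upper P (D : 'M[R]_(n + m)) e a b : symmx P -> symmx D ->
  (forall y, a * qf Ps y <= qf P y) -> 0 <= a ->
  (forall y, qf P y <= b * qf Ps y) -> 1 <= b ->
  specnorm D <= e * mu -> 0 <= e -> e < 1 ->
  forall x, qf (Hschur (Q P + D)) x <= (1 + e) * (1 + (b - 1) * (1 - delta)) * qf Ps x.
Proof.
move=> sP sD ha a0 hb b1 hD e0 e1 x.
have hP : forall y, 0 <= qf P y.
  by move=> y; apply: le_trans (ha y); apply: mulr_ge0.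
have sQD : symmx (Q P + D).
  by rewrite /symmx linearD /= Qham_sym // sD.
have uQD := step_unit hP hD e0 e1.
set us := Kgain (Q Ps) *m x.
have h0 : qf (Hschur (Q P + D)) x <= qf (Q P + D) (col_mx x us).
  rewrite (schur_id _ _ sQD uQD) lerDl.
  exact: (step_psd_uu hP hD e0 e1).
apply: (le_trans h0).
have [_ h1] := QD_ge hP hD e0 (col_mx x us).
apply: (le_trans h1); rewrite -mulrA; apply: ler_wpM2l; first by rewrite addr_ge0.
have h2 := Ps_eq x; rewrite -/us qf_Qham in h2.
rewrite qf_Qham.
have h3 := hb (A *m x + B *m us).
have h4 : 0 <= (b - 1) * qf Rc us.
  apply: mulr_ge0; first by rewrite subr_ge0.
  by apply: le_trans (hR us); apply: mulr_ge0; rewrite ?sq_ge0 // (le_trans (ltW mu0)).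
have h5 : (b - 1) * (delta * qf Ps x) <= (b - 1) * qf S x.
  by apply: ler_wpM2l; rewrite ?subr_ge0.
have h6 : b * qf Ps x = b * (qf Ps (A *m x + B *m us) + qf S x + qf Rc us).
  by rewrite -h2.
lra.
Qed.

End Step.

End SD.

Unset Implicit Arguments.
Set Strict Implicit.

Theorem proposition4 (R : realType) (n m : nat) (A : 'M[R]_n)
  (B : 'M[R]_(n, m)) (S : 'M[R]_n) (Rc : 'M[R]_m)
  (Pstar : 'M[R]_n) :
  (0 < n)%N -> (0 < m)%N ->
  posdef S -> posdef Rc -> stabilizable A B ->
  posdef Pstar -> Pstar = Hschur (Qham A B S Rc Pstar) ->
  forall P0 : 'M[R]_n, psd P0 ->
  exists dstar : R, 0 < dstar /\
  exists beta : R -> nat -> R, classKL beta /\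
  exists gamma : R -> R, classK gamma /\
  forall dQ : nat -> 'M[R]_(n + m),
    (forall i, symmx (dQ i)) ->
    (exists M : R, forall i, specnorm (dQ i) <= M) ->
    supnorm dQ < dstar ->
    forall i : nat,
      blk_uu (Qham A B S Rc (Phat A B S Rc P0 dQ i) + dQ i) \in unitmx /\
      specnorm (Phat A B S Rc P0 dQ i - Pstar)
        <= beta (specnorm (P0 - Pstar)) i + gamma (supnorm dQ).
Proof.
move=> n0 m0 pdS pdR _ pdPs dare P0 [sP0 pP0].
have [sS _] := pdS; have [sR _] := pdR; have [sPs _] := pdPs.
have [lS lS0 hS] := posdef_lb pdS.
have [lR lR0 hR] := posdef_lb pdR.
have [lP lP0 hPl] := posdef_lb pdPs.
have psPs : forall x, 0 <= qf Pstar x.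
  move=> x; apply: le_trans (hPl x); apply: mulr_ge0; rewrite ?sq_ge0 //; exact: ltW.
set Lam := specnorm Pstar + 1 + lS.
have Lam0 : 0 < Lam by rewrite /Lam; have := specnorm_ge0 Pstar; lra.
have hLam : forall x, qf Pstar x <= Lam * sq x.
  move=> x; apply: (le_trans (ler_norm _)); apply: (le_trans (qf_le_spec _ _)).
  apply: ler_wpM2r; rewrite ?sq_ge0 // /Lam; lra.
set delta := lS / Lam.
have d0 : 0 < delta by rewrite divr_gt0.
have d1 : delta < 1 by rewrite ltr_pdivrMr // mul1r /Lam; have := specnorm_ge0 Pstar; lra.
have hd : forall x, delta * qf Pstar x <= qf S x.
  move=> x; apply: le_trans (hS x).
  apply: (@le_trans _ _ (delta * (Lam * sq x))); first by apply: ler_wpM2l; [exact: ltW | exact: hLam].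
  by rewrite mulrA /delta divfK ?gt_eqF.
set mu := Num.min lS lR.
have mu0 : 0 < mu by rewrite lt_min lS0 lR0.
have muS : mu <= lS by rewrite ge_min lexx.
have muR : mu <= lR by rewrite ge_min lexx orbT.
set rho := (1 - delta) * (1 + delta / 2).
have rho0 : 0 < rho by rewrite /rho; apply: mulr_gt0; lra.
have rho1 : rho < 1 by rewrite /rho; nra.
have rhod : 1 - delta <= rho by rewrite /rho; nra.
exists (mu * delta / 2); split; first by have := mulr_gt0 mu0 d0; lra.
exists (fun r i => Lam / lP * rho ^+ i * r); split.
  by apply: classKL_geo => //; rewrite divr_gt0.
exists (fun s => Lam / (mu * (1 - rho)) * s); split.
  by apply: classK_lin; rewrite divr_gt0 // mulr_gt0 // subr_gt0.
move=> dQ symdQ [M hM] hsup.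
set s := supnorm dQ.
have hub : has_ubound [set specnorm (dQ i) | i in [set: nat]].
  by exists M => _ [j _ <-].
have hDi : forall j, specnorm (dQ j) <= s.
  by move=> j; apply: (ub_le_sup hub); exists j.
have s0 : 0 <= s by apply: le_trans (hDi 0%N); apply: specnorm_ge0.
set e := s / mu.
have e0 : 0 <= e by rewrite divr_ge0 // ltW.
have ed : e < delta / 2.
  by rewrite /e ltr_pdivrMr // mulrC mulrA.
have e1 : e < 1 by lra.
have hDe : forall j, specnorm (dQ j) <= e * mu.
  by move=> j; rewrite /e divfK ?gt_eqF.
set r0 := specnorm (P0 - Pstar).
have r00 : 0 <= r0 by apply: specnorm_ge0.
set u0 := r0 / lP.
have u00 : 0 <= u0 by rewrite divr_ge0 // ltW.
set E := e / (1 - rho).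
have E0 : 0 <= E by rewrite divr_ge0 // subr_ge0 ltW.
have rne : 1 - rho != 0 by rewrite subr_eq0 eq_sym lt_eqF.
have Eid : rho * E + e = E by rewrite /E; field.
set P := Phat A B S Rc P0 dQ.
have PS : forall i, P i.+1 = Hschur (Qham A B S Rc (P i) + dQ i) by [].
have hdev : forall y, `|qf (P0 - Pstar) y| <= u0 * qf Pstar y.
  move=> y; apply: (le_trans (qf_le_spec _ _)); rewrite -/r0.
  have -> : r0 * sq y = u0 * (lP * sq y).
    by rewrite /u0; field; rewrite gt_eqF.
  by apply: ler_wpM2l => //; apply: hPl.
have inv : forall i, symmx (P i) /\ exists a b, (0 <= a /\ a <= 1 /\ 1 <= b) /\
   (1 - a <= rho ^+ i * u0 + E /\ b - 1 <= rho ^+ i * u0 + E) /\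
   ((forall y, a * qf Pstar y <= qf (P i) y) /\ (forall y, qf (P i) y <= b * qf Pstar y)).
  elim=> [|i [sPi [a [b [[a0 [a1 b1]] [[la lb] [ha hb]]]]]]].
    split; first exact: sP0.
    have hq : forall y, qf P0 y = qf Pstar y + qf (P0 - Pstar) y.
      by move=> y; rewrite qfB; lra.
    have [hu|hu] := leP u0 1.
      exists (1 - u0), (1 + u0); rewrite ?expr0 ?mul1r; split; [lra|split; [lra|split]].
        move=> y; rewrite /P /= hq; have := hdev y; rewrite ler_norml => /andP[h _].
        lra.
      move=> y; rewrite /P /= hq; have := hdev y; rewrite ler_norml => /andP[_ h].
      lra.
    exists 0, (1 + u0); rewrite ?expr0 ?mul1r; split; [lra|split; [lra|split]].
      by move=> y; rewrite mul0r /P /=; apply: pP0.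
    move=> y; rewrite /P /= hq; have := hdev y; rewrite ler_norml => /andP[_ h].
    lra.
  have hPi : forall y, 0 <= qf (P i) y.
    by move=> y; apply: le_trans (ha y); apply: mulr_ge0.
  split.
    rewrite PS; apply: Hschur_sym.
    by rewrite /symmx linearD /= (Qham_sym _ _ sPi sS sR) (symdQ i).
  exists ((1 - e) * (a + (1 - a) * delta)), ((1 + e) * (1 + (b - 1) * (1 - delta))).
  set Y := rho ^+ i * u0 + E.
  have Y0 : 0 <= Y by rewrite /Y addr_ge0 // mulr_ge0 // exprn_ge0 // ltW.
  have f4 : Y * rho = rho ^+ i.+1 * u0 + rho * E by rewrite /Y exprS; ring.
  split; [split; [|split]|split; [split|split]].
  - apply: mulr_ge0; first lra.
    by apply: addr_ge0 => //; apply: mulr_ge0; lra.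
  - have t1 : (1 - a) * delta <= (1 - a) * 1 by apply: ler_wpM2l; lra.
    have t2 : 0 <= (1 - a) * delta by apply: mulr_ge0; lra.
    have t3 : (1 - e) * (a + (1 - a) * delta) <= 1 * (a + (1 - a) * delta).
      by apply: ler_wpM2r; lra.
    lra.
  - have t1 : 0 <= (b - 1) * (1 - delta) by apply: mulr_ge0; lra.
    have t2 : 0 <= e * (1 + (b - 1) * (1 - delta)) by apply: mulr_ge0; lra.
    have -> : (1 + e) * (1 + (b - 1) * (1 - delta)) =
      (1 + (b - 1) * (1 - delta)) + e * (1 + (b - 1) * (1 - delta)) by ring.
    lra.
  - have -> : 1 - (1 - e) * (a + (1 - a) * delta) =
       (1 - a) * (1 - delta) + e - e * ((1 - a) * (1 - delta)) by ring.
    have f1 : 0 <= e * ((1 - a) * (1 - delta)) by apply: mulr_ge0 => //; apply: mulr_ge0; lra.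
    have f2 : (1 - a) * (1 - delta) <= Y * (1 - delta) by apply: ler_wpM2r; [lra | exact: la].
    have f3 : Y * (1 - delta) <= Y * rho by apply: ler_wpM2l.
    lra.
  - have -> : (1 + e) * (1 + (b - 1) * (1 - delta)) - 1 =
       (b - 1) * ((1 - delta) * (1 + e)) + e by ring.
    have g1 : (1 - delta) * (1 + e) <= rho by rewrite /rho; apply: ler_wpM2l; lra.
    have g2 : (b - 1) * ((1 - delta) * (1 + e)) <= (b - 1) * rho by apply: ler_wpM2l; lra.
    have g3 : (b - 1) * rho <= Y * rho by apply: ler_wpM2r; [lra | exact: lb].
    lra.
  - move=> y; rewrite PS.
    exact: (step_lower sS sR sPs hS hR mu0 muS muR hd psPs dare sPi (symdQ i) ha a0 a1 (hDe i) e0 e1 y).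
  - move=> y; rewrite PS.
    exact: (step_upper sS sR sPs hS hR mu0 muS muR hd psPs dare sPi (symdQ i) ha a0 hb b1 (hDe i) e0 e1 y).
move=> i; have [sPi [a [b [[a0 [a1 b1]] [[la lb] [ha hb]]]]]] := inv i.
have hPi : forall y, 0 <= qf (P i) y.
  by move=> y; apply: le_trans (ha y); apply: mulr_ge0.
split; first exact: (step_unit A B hS hR mu0 muS muR hPi (hDe i) e0 e1).
set Y := rho ^+ i * u0 + E.
have Y0 : 0 <= Y by rewrite /Y addr_ge0 // mulr_ge0 // exprn_ge0 // ltW.
have -> : Lam / lP * rho ^+ i * r0 + Lam / (mu * (1 - rho)) * s = Y * Lam.
  by rewrite /Y /u0 /E /e; field; rewrite rne !gt_eqF.
apply: specnorm_le.
- by rewrite /symmx linearB /= sPi sPs.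
- by apply: mulr_ge0 => //; apply: ltW.
move=> y; rewrite qfB ler_norml.
have q0 := psPs y.
have k1 : (b - 1) * qf Pstar y <= Y * qf Pstar y by apply: ler_wpM2r; [exact: q0 | exact: lb].
have k2 : (1 - a) * qf Pstar y <= Y * qf Pstar y by apply: ler_wpM2r; [exact: q0 | exact: la].
have k3 : Y * qf Pstar y <= Y * (Lam * sq y) by apply: ler_wpM2l => //; apply: hLam.
rewrite mulrBl mul1r in k1; rewrite mulrBl mul1r in k2.
have := ha y; have := hb y; rewrite -mulrA.
move=> h1 h2; apply/andP; split; lra.
Qed.
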